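(* Let $\mathcal{SP}$ be the gap-insertion operad of set partitions and $\mathcal{NCP}\subset\mathcal{SP}$ its sub-operad of noncrossing partitions (defined in the context). Then the inclusion $i:\mathcal{NCP}\to\mathcal{SP}$ and the noncrossing closure $\operatorname{nc}:\mathcal{SP}\to\mathcal{NCP}$ are both morphisms of operads, and $\operatorname{nc}\circ i=\operatorname{Id}$, exhibiting $\mathcal{NCP}$ as a retract of $\mathcal{SP}$.
   Context: A partition of degree $n$ is a set partition of $[n]=\{1,\dots,n\}$ into nonempty blocks (for $n=0$ only the empty partition $\emptyset$); partitions of other finite linearly ordered sets are identified with partitions of $[n]$ via the order-preserving bijection. A partition is noncrossing if there are no $a<c<b<d$ with $a,b$ in one block and $c,d$ in a different block. Partitions of $[n]$ are ordered by refinement ($P\leq Q$ if every block of $Q$ is a union of blocks of $P$). The noncrossing closure $\operatorname{nc}(P)$ of a partition $P$ of $[n]$ is the finest noncrossing partition $Q$ of $[n]$ with $P\leq Q$. The gap-insertion operad $\mathcal{SP}$ is the non-symmetric set operad with $\mathcal{SP}(0)=\emptyset$ and, for $n\geq 1$, $\mathcal{SP}(n)$ the set of partitions of $[n-1]$ ($\mathcal{SP}(1)=\{\emptyset\}$, the unit). The partial composition, for $P=\{\pi_1,\dots,\pi_k\}\in\mathcal{SP}(m)$, $Q=\{\rho_1,\dots,\rho_l\}\in\mathcal{SP}(n)$, $i\in[m]$, is $P\diamond_i Q=\{\chi(\pi_1),\dots,\chi(\pi_k),\rho_1+i-1,\dots,\rho_l+i-1\}$ with $\chi(p)=p$ if $p<i$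 and $\chi(p)=p+n-1$ otherwise (insertion of $Q$ into the $i$-th gap of $P$). The noncrossing partitions form a sub-operad $\mathcal{NCP}$. *)

(* Defs.v *)
From mathcomp Require Import all_boot.
Set Implicit Arguments. Unset Strict Implicit. Unset Printing Implicit Defensive.

(* A partition of [n] is represented as a set of blocks over 'I_n
   (0-based: the element k+1 of [n] is the ordinal k). *)
Definition is_SP (n : nat) (P : {set {set 'I_n}}) : bool :=
  partition P [set: 'I_n].

Definition noncrossing (n : nat) (P : {set {set 'I_n}}) : bool :=
  [forall A in P, forall B in P, (A != B) ==>
     ~~ [exists a : 'I_n, exists b : 'I_n, exists c : 'I_n, exists d : 'I_n,
          [&& (a < c)%N, (c < b)%N, (b < d)%N,
              a \in A, b \in A, c \in B & d \in B]]].

Definition is_NCP (n : nat) (P : {set {set 'I_n}}) : bool :=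
  is_SP P && noncrossing P.

Definition refines (n : nat) (P Q : {set {set 'I_n}}) : bool :=
  [forall B in Q, exists S : {set {set 'I_n}}, (S \subset P) && (B == cover S)].

Definition is_nc_closure (n : nat) (P Q : {set {set 'I_n}}) : bool :=
  [&& is_NCP Q, refines P Q &
      [forall R : {set {set 'I_n}}, (is_NCP R && refines P R) ==> refines Q R]].

(* noncrossing closure (the choice is unique when it exists) *)
Definition nc (n : nat) (P : {set {set 'I_n}}) : {set {set 'I_n}} :=
  odflt P [pick Q | is_nc_closure P Q].

(* SP(a.+1) = partitions of 'I_a.
   For P in SP(a.+1), Q in SP(b.+1) and a gap i (0-based, i : 'I_a.+1,
   corresponding to the paper's gap i+1 in [a+1]), P \diamond_{i+1} Q is a
   partition of 'I_(a+b), i.e. an element of SP(a+b+1). *)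
Lemma shiftQ_lt (a b : nat) (i : 'I_a.+1) (y : 'I_b) : (y + i < a + b)%N.
Proof.
have hi : (i <= a)%N by rewrite -ltnS.
by rewrite -addSn [(a + b)%N]addnC; apply: leq_add.
Qed.

Lemma shiftP_lt (a b : nat) (x : 'I_a) : (x + b < a + b)%N.
Proof. by rewrite ltn_add2r. Qed.

Definition chiP (a b : nat) (i : 'I_a.+1) (x : 'I_a) : 'I_(a + b) :=
  if (x < i)%N then lshift b x else Ordinal (shiftP_lt b x).

Definition shiftQ (a b : nat) (i : 'I_a.+1) (y : 'I_b) : 'I_(a + b) :=
  Ordinal (shiftQ_lt i y).

Definition spcomp (a b : nat) (i : 'I_a.+1)
    (P : {set {set 'I_a}}) (Q : {set {set 'I_b}}) : {set {set 'I_(a + b)}} :=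
  (fun A : {set 'I_a} => [set chiP b i x | x in A]) @: P
  :|: (fun B : {set 'I_b} => [set shiftQ i y | y in B]) @: Q.

(* Main.v *)
Require Import Defs.
From mathcomp Require Import all_boot zify.
Set Implicit Arguments. Unset Strict Implicit. Unset Printing Implicit Defensive.

Section Gen.
Variable n : nat.
Implicit Types P Q R : {set {set 'I_n}}.

Definition same P (x y : 'I_n) : bool := [exists B in P, (x \in B) && (y \in B)].

Lemma SP_char P : is_SP P <->
  [/\ set0 \notin P, (forall x, exists2 B, B \in P & x \in B) &
      (forall B C x, B \in P -> C \in P -> x \in B -> x \in C -> B = C)].
Proof.
rewrite /is_SP /partition; split.
  case/and3P=> /eqP cov tI n0; split => //.
    move=> x; have : x \in cover P by rewrite cov inE.
    by case/bigcupP=> B PB xB; exists B.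
  move=> B C x PB PC xB xC; apply/eqP; apply: contraT => BC.
  have := (trivIsetP tI B C PB PC BC).
  by move/pred0P/(_ x); rewrite /= xB xC.
case=> n0 cv un; rewrite n0 andbT; apply/andP; split.
  apply/eqP/setP=> x; rewrite inE; have [B PB xB] := cv x.
  by apply/bigcupP; exists B.
apply/trivIsetP=> B C PB PC BC; apply/pred0P=> x /=.
apply/negbTE/negP=> /andP[xB xC]; by rewrite (un _ _ _ PB PC xB xC) eqxx in BC.
Qed.

Lemma sameP P x y : reflect (exists2 B, B \in P & (x \in B) && (y \in B)) (same P x y).
Proof. exact: (iffP exists_inP) => -[B]; exists B. Qed.

Lemma same_refl P x : is_SP P -> same P x x.
Proof. case/SP_char=> _ cv _; have [B PB xB] := cv x; by apply/sameP; exists B; rewrite ?xB. Qed.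

Lemma same_sym P x y : same P x y = same P y x.
Proof. by apply/sameP/sameP=> -[B PB /andP[? ?]]; exists B => //; apply/andP. Qed.

Lemma same_trans P x y z : is_SP P -> same P x y -> same P y z -> same P x z.
Proof.
case/SP_char=> _ _ un /sameP[B PB /andP[xB yB]] /sameP[C PC /andP[yC zC]].
rewrite (un _ _ _ PB PC yB yC) in xB; by apply/sameP; exists C; rewrite ?xB.
Qed.

Lemma same_in P B x y : is_SP P -> B \in P -> x \in B -> (y \in B) = same P x y.
Proof.
case/SP_char=> _ _ un PB xB; apply/idP/sameP => [yB|[C PC /andP[xC yC]]].
  by exists B; rewrite ?xB.
by rewrite (un _ _ _ PB PC xB xC).
Qed.

Lemma SP_eq P Q : is_SP P -> is_SP Q -> (forall x y, same P x y = same Q x y) -> P = Q.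
Proof.
move=> sP sQ e.
have key : forall P Q, is_SP P -> is_SP Q -> (forall x y, same P x y = same Q x y) ->
  {subset P <= Q}.
  move=> P1 Q1 s1 s2 e1 B PB.
  have /SP_char[n0 _ _] := s1.
  have [x xB] : exists x, x \in B.
    apply/set0Pn; apply: contraNneq n0 => <-; exact PB.
  have /SP_char[_ cv _] := s2; have [C QC xC] := cv x.
  suff -> : B = C by [].
  apply/setP=> y; rewrite (same_in y s1 PB xB) (same_in y s2 QC xC); exact: e1.
apply/setP=> B; apply/idP/idP; [exact: key| apply: key => // x y; exact/esym].
Qed.

Lemma refinesP P Q : is_SP P -> is_SP Q ->
  reflect (forall x y, same P x y -> same Q x y) (refines P Q).
Proof.
move=> sP sQ; apply: (iffP forall_inP).
  move=> h x y /sameP[A PA /andP[xA yA]].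
  have /SP_char[_ cv _] := sQ; have [B QB xB] := cv x.
  have /existsP[S /andP[SP /eqP BS]] := h B QB.
  move: (xB); rewrite BS => /bigcupP[A' SA' xA'].
  have A'P : A' \in P by apply: (subsetP SP).
  have yA' : y \in A' by rewrite (same_in y sP A'P xA') -(same_in y sP PA xA).
  apply/sameP; exists B; rewrite ?xB //= BS; apply/bigcupP; by exists A'.
move=> h B QB; apply/existsP; exists [set A in P | A \subset B].
apply/andP; split; first by apply/subsetP=> A; rewrite inE => /andP[].
apply/eqP/setP=> x; apply/idP/bigcupP.
  move=> xB; have /SP_char[_ cv _] := sP; have [A PA xA] := cv x.
  exists A => //; rewrite inE PA /=; apply/subsetP=> y yA.
  rewrite (same_in y sQ QB xB); apply: h; by rewrite -(same_in y sP PA xA).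
by case=> A; rewrite inE => /andP[_ /subsetP]; apply.
Qed.

Definition crossfree (r : rel 'I_n) := forall a c b d : 'I_n,
  (a < c)%N -> (c < b)%N -> (b < d)%N -> r a b -> r c d -> r a c.

Lemma ncP P : is_SP P -> reflect (crossfree (same P)) (noncrossing P).
Proof.
move=> sP; apply: (iffP forall_inP).
  move=> h a c b d ac cb bd /sameP[A PA /andP[aA bA]] /sameP[B PB /andP[cB dB]].
  have [AB|AB] := eqVneq A B.
    by apply/sameP; exists A; rewrite ?aA // AB.
  have := forall_inP (h A PA) B PB; rewrite AB /= => /negP; case.
  apply/existsP; exists a; apply/existsP; exists b; apply/existsP; exists c.
  apply/existsP; exists d; by rewrite ac cb bd aA bA cB dB.
move=> h A PA; apply/forall_inP=> B PB; apply/implyP=> AB; apply/negP.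
case/existsP=> a /existsP[b /existsP[c /existsP[d]]].
case/and5P=> ac cb bd aA /and3P[bA cB dB].
have sab : same P a b by apply/sameP; exists A; rewrite ?aA.
have scd : same P c d by apply/sameP; exists B; rewrite ?cB.
have := h a c b d ac cb bd sab scd.
rewrite -(same_in c sP PA aA) => cA.
have /SP_char[_ _ un] := sP.
by rewrite (un _ _ _ PA PB cA cB) eqxx in AB.
Qed.

Definition ep (E : rel 'I_n) := equivalence_partition E setT.

Lemma ep_SP (E : rel 'I_n) : (forall x, E x x) -> (forall x y, E x y = E y x) ->
  (forall x y z, E x y -> E y z -> E x z) -> is_SP (ep E).
Proof.
move=> r s t; apply: equivalence_partitionP => x y z _ _ _; split => // Exy.
apply/idP/idP => h; [apply: t h; rewrite s | apply: t h]; done.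
Qed.

Lemma ep_same (E : rel 'I_n) : (forall x, E x x) -> (forall x y, E x y = E y x) ->
  (forall x y z, E x y -> E y z -> E x z) -> forall x y, same (ep E) x y = E x y.
Proof.
move=> r s t x y; apply/sameP/idP.
  case=> B /imsetP[z _ ->]; rewrite !inE /= => /andP[zx zy].
  by apply: t zy; rewrite s.
move=> Exy; exists [set w in setT | E x w]; first by apply: imset_f.
by rewrite !inE r Exy.
Qed.


Definition ncrel P (x y : 'I_n) : bool :=
  [forall R : {set {set 'I_n}}, (is_NCP R && refines P R) ==> same R x y].

Lemma ncrel_r P : forall x, ncrel P x x.
Proof. by move=> x; apply/forallP=> R; apply/implyP=> /andP[/andP[sR _] _]; apply: same_refl. Qed.
Lemma ncrel_s P : forall x y, ncrel P x y = ncrel P y x.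
Proof.
by move=> x y; apply/forallP/forallP=> h R; apply/implyP=> H;
  rewrite same_sym; exact: (implyP (h R) H).
Qed.
Lemma ncrel_t P : forall x y z, ncrel P x y -> ncrel P y z -> ncrel P x z.
Proof.
move=> x y z /forallP h1 /forallP h2; apply/forallP=> R; apply/implyP=> H.
have /andP[/andP[sR _] _] := H.
exact: same_trans sR (implyP (h1 R) H) (implyP (h2 R) H).
Qed.

Lemma ncl_ex P : is_SP P -> is_nc_closure P (ep (ncrel P)).
Proof.
move=> sP.
have sN := ep_SP (@ncrel_r P) (@ncrel_s P) (@ncrel_t P).
have eN := ep_same (@ncrel_r P) (@ncrel_s P) (@ncrel_t P).
apply/and3P; split.
- rewrite /is_NCP sN /=; apply/ncP => // a c b d ac cb bd.
  rewrite !eN => /forallP h1 /forallP h2; apply/forallP=> R; apply/implyP=> H.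
  have /andP[/andP[sR nR] _] := H.
  exact: (ncP sR nR) ac cb bd (implyP (h1 R) H) (implyP (h2 R) H).
- apply/refinesP => // x y sxy; rewrite eN; apply/forallP=> R; apply/implyP.
  case/andP=> /andP[sR _] /(refinesP sP sR); exact.
- apply/forallP=> R; apply/implyP=> /andP[nR rR].
  have sR : is_SP R by case/andP: nR.
  apply/refinesP => // x y; rewrite eN => /forallP/(_ R); rewrite nR rR; exact.
Qed.

Lemma ncl_uniq P Q1 Q2 : is_nc_closure P Q1 -> is_nc_closure P Q2 -> Q1 = Q2.
Proof.
case/and3P=> n1 r1 /forallP m1; case/and3P=> n2 r2 /forallP m2.
have s1 : is_SP Q1 by case/andP: n1.
have s2 : is_SP Q2 by case/andP: n2.
have h12 := implyP (m1 Q2) (introT andP (conj n2 r2)).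
have h21 := implyP (m2 Q1) (introT andP (conj n1 r1)).
apply: SP_eq => // x y; apply/idP/idP; [exact: (refinesP s1 s2 h12) | exact: (refinesP s2 s1 h21)].
Qed.

Lemma nc_spec P : is_SP P -> is_nc_closure P (nc P).
Proof.
move=> sP; rewrite /nc; case: pickP => [Q //|no].
by have := no (ep (ncrel P)); rewrite ncl_ex.
Qed.

Lemma nc_eq P N : is_SP P -> is_nc_closure P N -> nc P = N.
Proof. by move=> sP h; apply: ncl_uniq (nc_spec sP) h. Qed.

Lemma nc_id P : is_NCP P -> nc P = P.
Proof.
move=> nP; have sP : is_SP P by case/andP: nP.
apply: nc_eq => //; apply/and3P; split => //.
  by apply/refinesP.
by apply/forallP=> R; apply/implyP=> /andP[].
Qed.

Lemma nc_min P R x y : is_SP P -> is_NCP R -> refines P R -> same (nc P) x y -> same R x y.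
Proof.
move=> sP nR rR; have /and3P[nN rN /forallP m] := nc_spec sP.
have sN : is_SP (nc P) by case/andP: nN.
have sR : is_SP R by case/andP: nR.
apply/(refinesP sN sR); apply: (implyP (m R)); by rewrite nR.
Qed.

End Gen.

Lemma pull_NCP n m (f : 'I_m -> 'I_n) (R : {set {set 'I_n}}) :
  (forall x y, (f x < f y)%N = (x < y)%N) -> is_NCP R ->
  let E := fun x y => same R (f x) (f y) in
  is_NCP (ep E) /\ forall x y, same (ep E) x y = E x y.
Proof.
move=> mon /andP[sR nR] E.
have r : forall x, E x x by move=> x; apply: same_refl.
have s : forall x y, E x y = E y x by move=> x y; apply: same_sym.
have t : forall x y z, E x y -> E y z -> E x z by move=> x y z; apply: same_trans.
have sN := ep_SP r s t; have eN := ep_same r s t.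
split => //; rewrite /is_NCP sN /=; apply/ncP => // a c b d ac cb bd.
rewrite !eN; apply: (ncP sR nR); by rewrite mon.
Qed.


Lemma mimg (T U : finType) (h : T -> U) (hi : injective h) (A : {set T}) x :
  (h x \in [set h y | y in A]) = (x \in A).
Proof. by apply/imsetP/idP => [[y yA /hi ->]|xA] //; exists x. Qed.

Section Union.
Variables (n a b : nat) (f : 'I_a -> 'I_n) (g : 'I_b -> 'I_n).
Hypotheses (fi : injective f) (gi : injective g) (fg : forall x y, f x != g y)
  (sur : forall u, (exists x, u = f x) \/ (exists y, u = g y)).
Variables (P : {set {set 'I_a}}) (Q : {set {set 'I_b}}).
Definition US : {set {set 'I_n}} := (fun A : {set 'I_a} => [set f x | x in A]) @: P
  :|: (fun B : {set 'I_b} => [set g y | y in B]) @: Q.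

Lemma US_ff x y : same US (f x) (f y) = same P x y.
Proof.
apply/sameP/sameP.
  case=> C; case/setUP=> /imsetP[A PA ->]; rewrite ?(mimg fi) //.
    by exists A.
  by case/andP=> /imsetP[z _ /eqP]; rewrite (negbTE (fg _ _)).
case=> A PA /andP[xA yA]; exists [set f x | x in A].
  by apply/setUP; left; apply: imset_f.
by rewrite !(mimg fi) xA.
Qed.

Lemma US_gg x y : same US (g x) (g y) = same Q x y.
Proof.
apply/sameP/sameP.
  case=> C; case/setUP=> /imsetP[A PA ->]; rewrite ?(mimg gi) //.
    by case/andP=> /imsetP[z _ /eqP]; rewrite eq_sym (negbTE (fg _ _)).
  by exists A.
case=> A PA /andP[xA yA]; exists [set g x | x in A].
  by apply/setUP; right; apply: imset_f.
by rewrite !(mimg gi) xA.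
Qed.

Lemma US_fg x y : same US (f x) (g y) = false.
Proof.
apply/negbTE/negP => /sameP[C]; case/setUP=> /imsetP[A PA ->] /andP[].
  by move=> _ /imsetP[z _ /eqP]; rewrite eq_sym (negbTE (fg _ _)).
by move=> /imsetP[z _ /eqP]; rewrite (negbTE (fg _ _)).
Qed.

Lemma US_SP : is_SP P -> is_SP Q -> is_SP US.
Proof.
move=> /SP_char[n0 cv un] /SP_char[n0' cv' un']; apply/SP_char; split.
- apply/negP; case/setUP=> /imsetP[A PA /esym/eqP]; rewrite imset_eq0 => /eqP A0.
    by rewrite -A0 PA in n0.
  by rewrite -A0 PA in n0'.
- move=> u; case: (sur u) => [[x ->]|[y ->]].
    have [A PA xA] := cv x; exists [set f x | x in A]; last exact: imset_f.
    by apply/setUP; left; apply: imset_f.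
  have [A PA xA] := cv' y; exists [set g x | x in A]; last exact: imset_f.
  by apply/setUP; right; apply: imset_f.
- move=> B C u; case/setUP=> /imsetP[A PA ->]; case/setUP=> /imsetP[A' PA' ->].
  + move=> /imsetP[x xA ->] /imsetP[x' xA' /fi ex]; subst x'.
    by rewrite (un _ _ _ PA PA' xA xA').
  + by move=> /imsetP[x xA ->] /imsetP[x' xA' /eqP]; rewrite (negbTE (fg _ _)).
  + by move=> /imsetP[x xA ->] /imsetP[x' xA' /eqP]; rewrite eq_sym (negbTE (fg _ _)).
  + move=> /imsetP[x xA ->] /imsetP[x' xA' /gi ex]; subst x'.
    by rewrite (un' _ _ _ PA PA' xA xA').
Qed.

End Union.

Section SPC.
Variables (m k : nat) (i : 'I_m.+1).
Local Notation ch := (@chiP m k i).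
Local Notation sh := (@shiftQ m k i).

Lemma ch_val x : nat_of_ord (ch x) = if (x < i)%N then nat_of_ord x else (x + k)%N.
Proof. by rewrite /chiP; case: ifP. Qed.
Lemma sh_val y : nat_of_ord (sh y) = (y + i)%N.
Proof. by []. Qed.

Lemma ch_range x : (ch x < i)%N || (i + k <= ch x)%N.
Proof. rewrite ch_val; case: ifP => h; [by rewrite h | apply/orP; right; lia]. Qed.
Lemma sh_range y : (i <= sh y)%N && (sh y < i + k)%N.
Proof. rewrite /shiftQ /=; have := ltn_ord y; lia. Qed.

Lemma ch_mono x y : (ch x < ch y)%N = (x < y)%N.
Proof. rewrite !ch_val; case: ifP; case: ifP => h1 h2; lia. Qed.
Lemma sh_mono x y : (sh x < sh y)%N = (x < y)%N.
Proof. rewrite /shiftQ /=; lia. Qed.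

Lemma ch_inj : injective ch.
Proof. move=> x y /(congr1 (@nat_of_ord _)); rewrite !ch_val => e; apply: ord_inj => /=; move: e; case: ifP; case: ifP => h1 h2; lia. Qed.
Lemma sh_inj : injective sh.
Proof. move=> x y /(congr1 (@nat_of_ord _)); rewrite /shiftQ /= => e; apply: ord_inj => /=; lia. Qed.
Lemma chsh x y : ch x != sh y.
Proof. apply/negP => /eqP /(congr1 (@nat_of_ord _)); rewrite ch_val /shiftQ /=; have := ltn_ord y; case: ifP => h; lia. Qed.

Lemma sp_sur u : (exists x, u = ch x) \/ (exists y, u = sh y).
Proof.
have ui := ltn_ord u; have ii := ltn_ord i.
have [h|h] := ltnP u i.
  have hx : (u < m)%N by lia.
  left; exists (Ordinal hx); apply: ord_inj; rewrite ch_val /=; by rewrite h.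
have [h2|h2] := ltnP u (i + k).
  have hy : (u - i < k)%N by lia.
  right; exists (Ordinal hy); apply: ord_inj; rewrite /shiftQ /=; lia.
have hx : (u - k < m)%N by lia.
left; exists (Ordinal hx); apply: ord_inj; rewrite ch_val /=; case: ifP => /=; lia.
Qed.

Variables (P : {set {set 'I_m}}) (Q : {set {set 'I_k}}).

Lemma spE : spcomp i P Q = US ch sh P Q.
Proof. by []. Qed.

Lemma sp_SP : is_SP P -> is_SP Q -> is_SP (spcomp i P Q).
Proof. rewrite spE; apply: US_SP; [exact: ch_inj|exact: sh_inj|exact: chsh|exact: sp_sur]. Qed.

Lemma sp_ff x y : same (spcomp i P Q) (ch x) (ch y) = same P x y.
Proof. rewrite spE; apply: US_ff; [exact: ch_inj|exact: chsh]. Qed.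
Lemma sp_gg x y : same (spcomp i P Q) (sh x) (sh y) = same Q x y.
Proof. rewrite spE; apply: US_gg; [exact: sh_inj|exact: chsh]. Qed.
Lemma sp_fg x y : same (spcomp i P Q) (ch x) (sh y) = false.
Proof. rewrite spE; apply: US_fg; exact: chsh. Qed.

Lemma sp_same u w : same (spcomp i P Q) u w ->
  (exists x y, [/\ u = ch x, w = ch y & same P x y]) \/
  (exists x y, [/\ u = sh x, w = sh y & same Q x y]).
Proof.
case: (sp_sur u) => [[x ->]|[x ->]]; case: (sp_sur w) => [[y ->]|[y ->]].
- by rewrite sp_ff => h; left; exists x, y.
- by rewrite sp_fg.
- by rewrite same_sym sp_fg.
- by rewrite sp_gg => h; right; exists x, y.
Qed.

Lemma sp_NCP : is_NCP P -> is_NCP Q -> is_NCP (spcomp i P Q).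
Proof.
move=> /andP[sP nP] /andP[sQ nQ]; have sS := sp_SP sP sQ.
rewrite /is_NCP sS /=; apply/ncP => // u c w d uc cw wd.
move/sp_same=> [[x [y [eu ew sxy]]]|[x [y [eu ew sxy]]]];
move/sp_same=> [[z [t [ec ed szt]]]|[z [t [ec ed szt]]]]; subst u w c d.
- rewrite sp_ff; move: uc cw wd; rewrite !ch_mono => *; exact: (ncP sP nP) sxy szt.
- exfalso; have := ch_range x; have := ch_range y; have := sh_range z; have := sh_range t; lia.
- exfalso; have := sh_range x; have := sh_range y; have := ch_range z; have := ch_range t; lia.
- rewrite sp_gg; move: uc cw wd; rewrite !sh_mono => *; exact: (ncP sQ nQ) sxy szt.
Qed.

End SPC.

Lemma sp_nc (a b : nat) (i : 'I_a.+1) (P : {set {set 'I_a}}) (Q : {set {set 'I_b}}) :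
  is_SP P -> is_SP Q -> nc (spcomp i P Q) = spcomp i (nc P) (nc Q).
Proof.
move=> sP sQ; have sS := sp_SP i sP sQ.
have /and3P[nP rP _] := nc_spec sP; have /and3P[nQ rQ _] := nc_spec sQ.
have snP : is_SP (nc P) by case/andP: nP.
have snQ : is_SP (nc Q) by case/andP: nQ.
have nT := sp_NCP i nP nQ; have sT : is_SP (spcomp i (nc P) (nc Q)) by case/andP: nT.
apply: nc_eq => //; apply/and3P; split => //.
  apply/refinesP => // u w /sp_same [[x [y [-> -> h]]]|[x [y [-> -> h]]]].
    by rewrite sp_ff; apply: (refinesP sP snP rP).
  by rewrite sp_gg; apply: (refinesP sQ snQ rQ).
apply/forallP => R; apply/implyP => /andP[nR rR]; have sR : is_SP R by case/andP: nR.
apply/refinesP => // u w /sp_same [[x [y [-> -> h]]]|[x [y [-> -> h]]]].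
  have [nE eE] := pull_NCP (@ch_mono a b i) nR.
  case/andP: (nE) => sE _.
  rewrite -eE; apply: (nc_min sP nE _ h); apply/(refinesP sP sE) => x' y' h'.
  by rewrite eE; apply: (refinesP sS sR rR); rewrite sp_ff.
have [nE eE] := pull_NCP (@sh_mono a b i) nR.
case/andP: (nE) => sE _.
rewrite -eE; apply: (nc_min sQ nE _ h); apply/(refinesP sQ sE) => x' y' h'.
by rewrite eE; apply: (refinesP sS sR rR); rewrite sp_gg.
Qed.

Lemma NCP0 : is_NCP (set0 : {set {set 'I_0}}).
Proof.
apply/andP; split.
  apply/SP_char; split; first by rewrite inE.
    by case.
  by move=> B C x; rewrite inE.
by apply/forall_inP=> A; rewrite inE.
Qed.

Theorem mainTheorem2 :
  is_NCP (set0 : {set {set 'I_0}}) /\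
  (forall (a b : nat) (i : 'I_a.+1) (P : {set {set 'I_a}}) (Q : {set {set 'I_b}}),
      is_NCP P -> is_NCP Q -> is_NCP (spcomp i P Q)) /\
  (forall (n : nat) (P : {set {set 'I_n}}), is_SP P -> is_NCP (nc P)) /\
  nc (set0 : {set {set 'I_0}}) = set0 /\
  (forall (a b : nat) (i : 'I_a.+1) (P : {set {set 'I_a}}) (Q : {set {set 'I_b}}),
      is_SP P -> is_SP Q -> nc (spcomp i P Q) = spcomp i (nc P) (nc Q)) /\
  (forall (n : nat) (P : {set {set 'I_n}}), is_NCP P -> nc P = P).
Proof.
split; first exact: NCP0.
split; first by move=> a b i P Q; apply: sp_NCP.
split; first by move=> n P sP; case/and3P: (nc_spec sP).
split; first exact: nc_id NCP0.
split; first by move=> a b i P Q; apply: sp_nc.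
by move=> n P; apply: nc_id.
Qed.
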